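(* With $T_{2,n,q}$ as defined below, as $n\to\infty$, $$|T_{2,n,q}|=\begin{cases}O(n^{-1}) & q\in[-1,0),\\ O(n^{-1}\log n) & q=0,\\ O(n^{q-1}) & q\in(0,1).\end{cases}$$
   Context: For $q\in[-1,1)$ and $k\ge1$: $H(k,q):=\frac{k}{2q-1}\Big(\frac{\Gamma(k+2q)}{\Gamma(k+1)\Gamma(2q)}-1\Big)$ if $q\ne\frac12$ (where $\frac{\Gamma(k+2q)}{\Gamma(2q)}$ means the Pochhammer product $2q(2q+1)\cdots(2q+k-1)$), and $H(k,\tfrac12):=k\sum_{j=1}^k\frac1j$. Also $I(k,q):=\frac{\Gamma(k+1)}{\Gamma(k+q)\Gamma(1-q)}$, with the convention $1/\Gamma(0)=0$. Define $$T_{2,n,q}:=\int_0^1\frac{u^{n+q}(1-u)^{-q}}{1+u}\,du\ \sum_{k=1}^n(-1)^{n-k}\frac{H(k,q)I(k,q)}{k^2}.$$ *)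

(* Defs.v *)
From Stdlib Require Import Reals.
From Coquelicot Require Import Coquelicot.
Open Scope R_scope.

Definition Gamma (x : R) : R :=
  RInt_gen (fun t => Rpower t (x - 1) * exp (- t)) (at_right 0) (Rbar_locally p_infty).

(* 1/Gamma on [0, +oo), with the convention 1/Gamma(0) = 0.
   (Only used at arguments >= 0.) *)
Definition rGamma (x : R) : R := if Rlt_dec 0 x then / Gamma x else 0.

(* Pochhammer product a (a+1) ... (a+k-1) = Gamma(a+k)/Gamma(a). *)
Fixpoint poch (a : R) (k : nat) : R :=
  match k with
  | O => 1
  | S k' => poch a k' * (a + INR k')
  end.

Definition Hfun (k : nat) (q : R) : R :=
  if Req_EM_T q (1/2) then INR k * sum_n_m (fun j => / INR j) 1 k
  else INR k / (2 * q - 1) * (poch (2 * q) k / INR (Factorial.fact k) - 1).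

Definition Ifun (k : nat) (q : R) : R :=
  INR (Factorial.fact k) * rGamma (INR k + q) * rGamma (1 - q).

Definition T2 (n : nat) (q : R) : R :=
  RInt_gen (fun u => Rpower u (INR n + q) * Rpower (1 - u) (- q) / (1 + u))
           (at_right 0) (at_left 1)
  * sum_n_m (fun k => (-1) ^ (n - k) * Hfun k q * Ifun k q / (INR k ^ 2)) 1 n.

(* Main.v *)
Require Import Defs.
From Stdlib Require Import Reals Lra Lia Classical.
From Coquelicot Require Import Coquelicot.
Open Scope R_scope.


Lemma ballR (x e y : R) : ball x e y <-> Rabs (y - x) < e.
Proof. reflexivity. Qed.

Lemma ln_le_sub1 y : 0 < y -> ln y <= y - 1.
Proof. intros Hy. pose proof (exp_ineq1_le (ln y)). rewrite exp_ln in H; lra. Qed.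

Lemma lim_left_incr (G : R -> R) (a b M : R) : a < b ->
  (forall x y, a < x -> x <= y -> y < b -> G x <= G y) ->
  (forall x, a < x < b -> G x <= M) ->
  exists l, filterlim G (at_left b) (locally l).
Proof.
  intros Hab Hm HM.
  set (E := fun y => exists x, a < x < b /\ y = G x).
  assert (HE1 : bound E) by (exists M; intros y [x [Hx ->]]; now apply HM).
  assert (HE2 : exists y, E y) by (exists (G ((a+b)/2)); exists ((a+b)/2); split; [lra|auto]).
  destruct (completeness E HE1 HE2) as [l [Hub Hlub]].
  exists l. intros P [eps HP].
  assert (Hx0 : exists x0, a < x0 < b /\ l - eps < G x0).
  { apply NNPP; intro Hn.
    assert (l <= l - eps); [|destruct eps; simpl in *; lra].
    apply Hlub. intros y [x [Hx ->]].
    destruct (Rle_or_lt (G x) (l - eps)); auto. exfalso; apply Hn; exists x; auto. }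
  destruct Hx0 as [x0 [Hx0 Hl]].
  assert (Hd : 0 < b - x0) by lra.
  exists (mkposreal _ Hd). intros x Hx Hxb. apply HP. apply ballR.
  assert (Hx' : Rabs (x - b) < b - x0) by exact Hx. apply Rabs_def2 in Hx'.
  assert (G x0 <= G x) by (apply Hm; lra).
  assert (G x <= l) by (apply Hub; exists x; split; [lra|auto]).
  apply Rabs_def1; lra.
Qed.

Lemma lim_right_incr (G : R -> R) (a b M : R) : a < b ->
  (forall x y, a < x -> x <= y -> y < b -> G x <= G y) ->
  (forall x, a < x < b -> - M <= G x) ->
  exists l, filterlim G (at_right a) (locally l).
Proof.
  intros Hab Hm HM.
  set (E := fun y => exists x, a < x < b /\ y = - G x).
  assert (HE1 : bound E) by (exists M; intros y [x [Hx ->]]; specialize (HM x Hx); lra).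
  assert (HE2 : exists y, E y) by (exists (- G ((a+b)/2)); exists ((a+b)/2); split; [lra|auto]).
  destruct (completeness E HE1 HE2) as [l [Hub Hlub]].
  exists (-l). intros P [eps HP].
  assert (Hx0 : exists x0, a < x0 < b /\ l - eps < - G x0).
  { apply NNPP; intro Hn.
    assert (l <= l - eps); [|destruct eps; simpl in *; lra].
    apply Hlub. intros y [x [Hx ->]].
    destruct (Rle_or_lt (- G x) (l - eps)); auto. exfalso; apply Hn; exists x; auto. }
  destruct Hx0 as [x0 [Hx0 Hl]].
  assert (Hd : 0 < x0 - a) by lra.
  exists (mkposreal _ Hd). intros x Hx Hxb. apply HP. apply ballR.
  assert (Hx' : Rabs (x - a) < x0 - a) by exact Hx. apply Rabs_def2 in Hx'.
  assert (G x <= G x0) by (apply Hm; lra).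
  assert (- G x <= l) by (apply Hub; exists x; split; [lra|auto]).
  apply Rabs_def1; lra.
Qed.

Lemma lim_pinfty_incr (G : R -> R) (a M : R) :
  (forall x y, a < x -> x <= y -> G x <= G y) ->
  (forall x, a < x -> G x <= M) ->
  exists l, filterlim G (Rbar_locally p_infty) (locally l).
Proof.
  intros Hm HM.
  set (E := fun y => exists x, a < x /\ y = G x).
  assert (HE1 : bound E) by (exists M; intros y [x [Hx ->]]; now apply HM).
  assert (HE2 : exists y, E y) by (exists (G (a+1)); exists (a+1); split; [lra|auto]).
  destruct (completeness E HE1 HE2) as [l [Hub Hlub]].
  exists l. intros P [eps HP].
  assert (Hx0 : exists x0, a < x0 /\ l - eps < G x0).
  { apply NNPP; intro Hn.
    assert (l <= l - eps); [|destruct eps; simpl in *; lra].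
    apply Hlub. intros y [x [Hx ->]].
    destruct (Rle_or_lt (G x) (l - eps)); auto. exfalso; apply Hn; exists x; auto. }
  destruct Hx0 as [x0 [Hx0 Hl]].
  exists x0. intros x Hx. apply HP. apply ballR.
  assert (G x0 <= G x) by (apply Hm; lra).
  assert (G x <= l) by (apply Hub; exists x; split; [lra|auto]).
  apply Rabs_def1; lra.
Qed.

Lemma gen_of_prim (Fa Fb : (R -> Prop) -> Prop) {FFa : Filter Fa} {FFb : Filter Fb}
  (f G : R -> R) (la lb : R) :
  filterlim G Fa (locally la) -> filterlim G Fb (locally lb) ->
  filter_prod Fa Fb (fun ab => is_RInt f (fst ab) (snd ab) (G (snd ab) - G (fst ab))) ->
  is_RInt_gen f Fa Fb (lb - la).
Proof.
  intros Ha Hb Hp. unfold is_RInt_gen. apply filterlimi_locally. intros eps.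
  assert (He : 0 < eps / 2) by (destruct eps; simpl; lra).
  assert (Ha' := Ha (ball la (mkposreal _ He)) (locally_ball _ _)).
  assert (Hb' := Hb (ball lb (mkposreal _ He)) (locally_ball _ _)).
  unfold filtermap in Ha', Hb'.
  assert (Hq : filter_prod Fa Fb (fun ab => ball la (mkposreal _ He) (G (fst ab)) /\
                                       ball lb (mkposreal _ He) (G (snd ab)))).
  { apply Filter_prod with (1 := Ha') (2 := Hb'). intros; simpl; auto. }
  generalize (filter_and _ _ Hp Hq). apply filter_imp.
  intros [s t] [H1 [H2 H3]]. simpl in *. exists (G t - G s). split; auto.
  assert (H2' : Rabs (G s - la) < eps / 2) by exact H2.
  assert (H3' : Rabs (G t - lb) < eps / 2) by exact H3.
  change (Rabs (G t - G s - (lb - la)) < eps).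
  apply Rabs_def2 in H2'; apply Rabs_def2 in H3'. apply Rabs_def1; lra.
Qed.


Lemma minmax_in a b x y z : a < x < b -> a < y < b -> Rmin x y <= z <= Rmax x y -> a < z < b.
Proof. unfold Rmin, Rmax; destruct (Rle_dec x y); lra. Qed.

Lemma minmax_in' a x y z : a < x -> a < y -> Rmin x y <= z <= Rmax x y -> a < z.
Proof. unfold Rmin, Rmax; destruct (Rle_dec x y); lra. Qed.

Lemma exR_ab (f : R -> R) a b s t : (forall x, a < x < b -> continuous f x) ->
  a < s < b -> a < t < b -> ex_RInt f s t.
Proof. intros Hc Hs Ht. apply (@ex_RInt_continuous R_CompleteNormedModule). intros z Hz. apply Hc. eapply minmax_in; [exact Hs|exact Ht|exact Hz]. Qed.

Lemma chas (f : R -> R) s t u : ex_RInt f s t -> ex_RInt f t u -> RInt f s u = RInt f s t + RInt f t u :> R.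
Proof. intros. rewrite <- (RInt_Chasles f s t u); auto. Qed.

Lemma ex_gen_ab (f : R -> R) a b c M : a < c < b ->
  (forall x, a < x < b -> continuous f x) ->
  (forall x, a < x < b -> 0 <= f x) ->
  (forall s t, a < s < c -> c < t < b -> RInt f s t <= M) ->
  exists l, is_RInt_gen f (at_right a) (at_left b) l.
Proof.
  intros Hc Hcont Hpos HM.
  set (G := fun t => RInt f c t : R).
  assert (Hex : forall s t, a < s < b -> a < t < b -> ex_RInt f s t) by (intros; eapply exR_ab; eauto).
  assert (Hdiff : forall s t, a < s < b -> a < t < b -> RInt f s t = G t - G s :> R).
  { intros s t Hs Ht. unfold G. rewrite (chas f c s t) by (apply Hex; lra). lra. }
  assert (Gc : G c = 0) by (unfold G; rewrite RInt_point; reflexivity).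
  assert (Hge : forall s t, a < s -> s <= t -> t < b -> 0 <= RInt f s t).
  { intros s t H1 H2 H3. apply RInt_ge_0; auto. apply Hex; lra. intros; apply Hpos; lra. }
  assert (HM0 : 0 <= M).
  { apply Rle_trans with (RInt f ((a+c)/2) ((c+b)/2)). apply Hge; lra. apply HM; lra. }
  assert (Hmono : forall x y, a < x -> x <= y -> y < b -> G x <= G y).
  { intros x y H1 H2 H3. assert (0 <= RInt f x y) by (apply Hge; lra).
    rewrite Hdiff in H by lra. lra. }
  destruct (lim_left_incr G a b M) as [lb Hlb]; try lra; auto.
  { intros t Ht. destruct (Rle_or_lt t c).
    - assert (0 <= RInt f t c) by (apply Hge; lra). rewrite Hdiff in H0 by lra.
      rewrite Gc in H0. lra.
    - assert (K1 : 0 <= RInt f ((a+c)/2) c) by (apply Hge; lra).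
      assert (K2 : RInt f ((a+c)/2) t <= M) by (apply HM; lra).
      rewrite (chas f _ c t) in K2 by (apply Hex; lra). unfold G; lra. }
  destruct (lim_right_incr G a b M) as [la Hla]; try lra; auto.
  { intros t Ht. destruct (Rle_or_lt c t).
    - assert (0 <= RInt f c t) by (apply Hge; lra). unfold G; lra.
    - assert (K1 : 0 <= RInt f c ((c+b)/2)) by (apply Hge; lra).
      assert (K2 : RInt f t ((c+b)/2) <= M) by (apply HM; lra).
      rewrite (chas f t c) in K2 by (apply Hex; lra).
      rewrite (Hdiff t c) in K2 by lra. rewrite Gc in K2. unfold G in *. lra. }
  exists (lb - la). apply gen_of_prim with G; try typeclasses eauto; auto.
  apply Filter_prod with (fun s => a < s < b) (fun t => a < t < b).
  - assert (Hd : 0 < b - a) by lra. exists (mkposreal _ Hd). intros x Hx Hax.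
    assert (Hx' : Rabs (x - a) < b - a) by exact Hx. apply Rabs_def2 in Hx'. lra.
  - assert (Hd : 0 < b - a) by lra. exists (mkposreal _ Hd). intros x Hx Hax.
    assert (Hx' : Rabs (x - b) < b - a) by exact Hx. apply Rabs_def2 in Hx'. lra.
  - intros s t Hs Ht. simpl. rewrite <- Hdiff by auto. apply (@RInt_correct R_CompleteNormedModule). auto.
Qed.

Lemma ex_gen_ainf (f : R -> R) a c M : a < c ->
  (forall x, a < x -> continuous f x) ->
  (forall x, a < x -> 0 <= f x) ->
  (forall s t, a < s < c -> c < t -> RInt f s t <= M) ->
  exists l, is_RInt_gen f (at_right a) (Rbar_locally p_infty) l.
Proof.
  intros Hc Hcont Hpos HM.
  set (G := fun t => RInt f c t : R).
  assert (Hex : forall s t, a < s -> a < t -> ex_RInt f s t).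
  { intros s t Hs Ht. apply (@ex_RInt_continuous R_CompleteNormedModule). intros z Hz. apply Hcont. eapply minmax_in'; [exact Hs|exact Ht|exact Hz]. }
  assert (Hdiff : forall s t, a < s -> a < t -> RInt f s t = G t - G s :> R).
  { intros s t Hs Ht. unfold G. rewrite (chas f c s t) by (apply Hex; lra). lra. }
  assert (Gc : G c = 0) by (unfold G; rewrite RInt_point; reflexivity).
  assert (Hge : forall s t, a < s -> s <= t -> 0 <= RInt f s t).
  { intros s t H1 H2. apply RInt_ge_0; auto. apply Hex; lra. intros; apply Hpos; lra. }
  assert (HM0 : 0 <= M).
  { apply Rle_trans with (RInt f ((a+c)/2) (c+1)). apply Hge; lra. apply HM; lra. }
  assert (Hmono : forall x y, a < x -> x <= y -> G x <= G y).
  { intros x y H1 H2. assert (0 <= RInt f x y) by (apply Hge; lra).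
    rewrite Hdiff in H by lra. lra. }
  destruct (lim_pinfty_incr G a M) as [lb Hlb]; auto.
  { intros t Ht. destruct (Rle_or_lt t c).
    - assert (0 <= RInt f t c) by (apply Hge; lra). rewrite Hdiff in H0 by lra.
      rewrite Gc in H0. lra.
    - assert (K1 : 0 <= RInt f ((a+c)/2) c) by (apply Hge; lra).
      assert (K2 : RInt f ((a+c)/2) t <= M) by (apply HM; lra).
      rewrite (chas f _ c t) in K2 by (apply Hex; lra). unfold G; lra. }
  destruct (lim_right_incr G a (c+1) M) as [la Hla]; try lra.
  { intros; apply Hmono; lra. }
  { intros t Ht. destruct (Rle_or_lt c t).
    - assert (0 <= RInt f c t) by (apply Hge; lra). unfold G; lra.
    - assert (K1 : 0 <= RInt f c (c+1)) by (apply Hge; lra).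
      assert (K2 : RInt f t (c+1) <= M) by (apply HM; lra).
      rewrite (chas f t c) in K2 by (apply Hex; lra).
      rewrite (Hdiff t c) in K2 by lra. rewrite Gc in K2. unfold G in *. lra. }
  exists (lb - la). apply gen_of_prim with G; try typeclasses eauto; auto.
  apply Filter_prod with (fun s => a < s) (fun t => a < t).
  - exists (mkposreal _ Rlt_0_1). intros x Hx Hax. auto.
  - exists a. auto.
  - intros s t Hs Ht. simpl. rewrite <- Hdiff by auto. apply (@RInt_correct R_CompleteNormedModule). auto.
Qed.


Lemma exp_mono x y : x <= y -> exp x <= exp y.
Proof. intros [H|H]; [left; apply exp_increasing; auto| subst; lra]. Qed.

Lemma ln_neg t : 0 < t -> t < 1 -> ln t < 0.
Proof. intros. rewrite <- ln_1. apply ln_increasing; lra. Qed.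

Lemma ln_nonneg t : 1 <= t -> 0 <= ln t.
Proof. intros. rewrite <- ln_1. apply ln_le; lra. Qed.

Lemma pow_le_exp p t : 0 <= p -> 0 < t ->
  Rpower t p <= exp (p * ln (2*(p+1))) * exp (t/2).
Proof.
  intros Hp Ht. unfold Rpower. rewrite <- exp_plus. apply exp_mono.
  assert (H := ln_le_sub1 (t / (2*(p+1)))).
  rewrite ln_div in H by lra.
  assert (H1 : ln t <= ln (2*(p+1)) + t / (2*(p+1))) by (apply Rle_trans with (ln (2 * (p + 1)) + (t / (2 * (p + 1)) - 1)); [|]; [assert (0 < t/(2*(p+1))) by (apply Rdiv_lt_0_compat; lra); lra|lra]).
  assert (H2 : p * ln t <= p * ln (2*(p+1)) + p * (t / (2*(p+1)))) by (rewrite <- Rmult_plus_distr_l; apply Rmult_le_compat_l; lra).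
  assert (H3 : p * (t / (2*(p+1))) <= t/2).
  { unfold Rdiv. rewrite Rinv_mult. 
    assert (0 < / (p+1)) by (apply Rinv_0_lt_compat; lra).
    assert (p * / (p+1) <= 1).
    { apply Rmult_le_reg_r with (p+1). lra. rewrite Rmult_assoc, Rinv_l by lra. lra. }
    assert (0 < / 2) by lra.
    replace (p * (t * (/ 2 * / (p + 1)))) with ((p * / (p+1)) * (t * / 2)) by ring.
    replace (t * / 2) with (1 * (t * / 2)) at 2 by ring.
    apply Rmult_le_compat_r; [|auto]. apply Rmult_le_pos; lra. }
  lra.
Qed.

Definition gf (x t : R) := Rpower t (x - 1) * exp (- t).

Lemma gf_cont x t : 0 < t -> continuous (gf x) t.
Proof. intros Ht. apply (@ex_derive_continuous R_AbsRing R_NormedModule). unfold gf, Rpower. auto_derive. lra. Qed.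

Lemma gf_pos x t : 0 <= gf x t.
Proof. unfold gf, Rpower. apply Rmult_le_pos; left; apply exp_pos. Qed.

Lemma gf_bound x t : 1 <= x -> 0 < t ->
  gf x t <= exp ((x-1) * ln (2*x)) * exp (- (t/2)).
Proof.
  intros Hx Ht. unfold gf.
  assert (H := pow_le_exp (x-1) t ltac:(lra) Ht).
  replace (2 * (x - 1 + 1)) with (2 * x) in H by ring.
  apply Rle_trans with (exp ((x-1) * ln (2*x)) * exp (t/2) * exp (- t)).
  - apply Rmult_le_compat_r. left; apply exp_pos. auto.
  - rewrite Rmult_assoc, <- exp_plus. replace (t/2 + - t) with (- (t/2)) by field. lra.
Qed.

Lemma is_RInt_expdecay K s t : is_RInt (fun u => K * exp (- (u/2))) s t
   (2 * K * exp (- (s/2)) - 2 * K * exp (- (t/2))).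
Proof.
  set (F := fun u => - 2 * K * exp (- (u/2))).
  replace (2 * K * exp (- (s/2)) - 2 * K * exp (- (t/2))) with (minus (F t) (F s)).
  2:{ unfold F, minus, plus, opp. simpl. ring. }
  apply (@is_RInt_derive R_CompleteNormedModule).
  - intros u _. unfold F. auto_derive. auto. match goal with |- ?a = ?b => change (@eq R a b) end. unfold Rdiv. field.
  - intros u _. apply (@ex_derive_continuous R_AbsRing R_NormedModule). auto_derive. auto.
Qed.

Lemma Gamma_exists x : 1 <= x -> exists l,
  is_RInt_gen (gf x) (at_right 0) (Rbar_locally p_infty) l.
Proof.
  intros Hx. set (K := exp ((x-1) * ln (2*x))).
  apply ex_gen_ainf with 1 (2 * K); try lra.
  - intros; apply gf_cont; lra.
  - intros; apply gf_pos.
  - intros s t Hs Ht.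
    assert (Hex : ex_RInt (gf x) s t).
    { apply (@ex_RInt_continuous R_CompleteNormedModule). intros z Hz. apply gf_cont.
      eapply minmax_in'; [| |exact Hz]; lra. }
    apply Rle_trans with (RInt (fun u => K * exp (- (u/2))) s t).
    + apply RInt_le; try lra; auto.
      * eexists; apply is_RInt_expdecay.
      * intros u Hu. apply gf_bound; lra.
    + rewrite (is_RInt_unique _ _ _ _ (is_RInt_expdecay K s t)).
      assert (0 < K) by apply exp_pos.
      assert (0 < exp (- (t/2))) by apply exp_pos.
      assert (exp (- (s/2)) <= 1) by (rewrite <- exp_0; apply exp_mono; lra).
      nra.
Qed.

Lemma Gamma_eq x l : is_RInt_gen (gf x) (at_right 0) (Rbar_locally p_infty) l -> Gamma x = l.
Proof.
  intros H. unfold Gamma. apply (@is_RInt_gen_unique R_CompleteNormedModule); try typeclasses eauto.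
  exact H.
Qed.

Definition hh (x t : R) := - (Rpower t x * exp (- t)).
Definition dhh (x t : R) := Rpower t x * exp (- t) - x * (Rpower t (x - 1) * exp (- t)).

Lemma hh_deriv x t : 0 < t -> is_derive (hh x) t (dhh x t).
Proof.
  intros Ht. unfold hh, dhh, Rpower. auto_derive. auto.
  match goal with |- ?a = ?b => change (@eq R a b) end.
  replace ((x - 1) * ln t) with (x * ln t + - ln t) by ring.
  rewrite exp_plus, (exp_Ropp (ln t)), exp_ln by auto. field. lra.
Qed.

Lemma hh_lim0 x : 1 <= x -> filterlim (hh x) (at_right 0) (locally 0).
Proof.
  intros Hx P [eps HP].
  assert (Hd : 0 < Rmin eps 1) by (destruct eps; apply Rmin_pos; simpl; lra).
  exists (mkposreal _ Hd). intros t Ht Htp.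
  assert (Ht' : Rabs (t - 0) < Rmin eps 1) by exact Ht.
  rewrite Rminus_0_r, Rabs_pos_eq in Ht' by lra.
  assert (Hm1 := Rmin_r eps 1). assert (Hm2 := Rmin_l eps 1).
  apply HP. change (Rabs (hh x t - 0) < eps).
  rewrite Rminus_0_r. unfold hh. rewrite Rabs_Ropp.
  unfold Rpower. rewrite Rabs_pos_eq by (apply Rmult_le_pos; left; apply exp_pos).
  assert (exp (x * ln t) <= t).
  { rewrite <- (exp_ln t) at 2 by auto. apply exp_mono.
    assert (ln t < 0) by (apply ln_neg; lra). nra. }
  assert (exp (- t) <= 1) by (rewrite <- exp_0; apply exp_mono; lra).
  assert (0 < exp (x * ln t)) by apply exp_pos.
  assert (0 < exp (- t)) by apply exp_pos.
  nra.
Qed.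

Lemma hh_liminf x : 1 <= x -> filterlim (hh x) (Rbar_locally p_infty) (locally 0).
Proof.
  intros Hx P [eps HP].
  set (K := exp (x * ln (2*(x+1)))).
  assert (HK : 0 < K) by apply exp_pos.
  exists (Rmax 1 (2 * K / eps)). intros t Ht.
  assert (Ht1 := Rmax_l 1 (2*K/eps)). assert (Ht2 := Rmax_r 1 (2*K/eps)).
  apply HP. change (Rabs (hh x t - 0) < eps).
  rewrite Rminus_0_r. unfold hh. rewrite Rabs_Ropp.
  assert (Hp : 0 <= Rpower t x) by (left; apply exp_pos).
  rewrite Rabs_pos_eq by (apply Rmult_le_pos; [auto|left; apply exp_pos]).
  assert (H1 := pow_le_exp x t ltac:(lra) ltac:(lra)). fold K in H1.
  assert (H2 : exp (- t) = exp (- (t/2)) * exp (- (t/2))) by (rewrite <- exp_plus; f_equal; field).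
  assert (H3 : exp (t/2) * exp (- (t/2)) = 1) by (rewrite <- exp_plus; replace (t/2 + - (t/2)) with 0 by ring; apply exp_0).
  assert (H4 : exp (- (t/2)) * (1 + t/2) <= 1).
  { assert (H5 := exp_ineq1_le (t/2)). assert (0 < exp (- (t/2))) by apply exp_pos. nra. }
  assert (Heps : 0 < eps) by (destruct eps; auto).
  assert (H6 : 2 * K < eps * t).
  { assert (2 * K / eps < t) by lra. apply Rmult_lt_reg_r with (/ eps).
    apply Rinv_0_lt_compat; auto. replace (eps * t * / eps) with t by (field; lra). auto. }
  assert (0 < exp (- (t/2))) by apply exp_pos.
  assert (0 < exp (t/2)) by apply exp_pos.
  apply Rle_lt_trans with (K * exp (t/2) * exp (- t)).
  { apply Rmult_le_compat_r; [left; apply exp_pos| auto]. }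
  rewrite H2. replace (K * exp (t / 2) * (exp (- (t / 2)) * exp (- (t / 2)))) with
     (K * (exp (t / 2) * exp (- (t / 2))) * exp (- (t / 2))) by ring.
  rewrite H3. nra.
Qed.

Lemma Gamma_succ x : 1 <= x -> Gamma (x + 1) = x * Gamma x.
Proof.
  intros Hx. destruct (Gamma_exists x Hx) as [l Hl].
  rewrite (Gamma_eq x l Hl).
  assert (Hd : is_RInt_gen (dhh x) (at_right 0) (Rbar_locally p_infty) (0 - 0)).
  { apply gen_of_prim with (hh x); try typeclasses eauto.
    - apply hh_lim0; auto.
    - apply hh_liminf; auto.
    - apply Filter_prod with (fun s => 0 < s) (fun t => 0 < t).
      + exists (mkposreal _ Rlt_0_1). intros y _ Hy. auto.
      + exists 0. auto.
      + intros s t Hs Ht. simpl.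
        apply (@is_RInt_derive R_CompleteNormedModule (hh x) (dhh x)).
        * intros u Hu. apply hh_deriv. eapply minmax_in'; [exact Hs|exact Ht|exact Hu].
        * intros u Hu. apply (@ex_derive_continuous R_AbsRing R_NormedModule).
          assert (0 < u) by (eapply minmax_in'; [exact Hs|exact Ht|exact Hu]).
          unfold dhh, Rpower. auto_derive. lra. }
  assert (Hs := is_RInt_gen_scal _ x _ Hl).
  assert (Hp := is_RInt_gen_plus _ _ _ _ Hd Hs).
  apply Gamma_eq.
  replace (x * l) with (plus (0 - 0) (scal x l)).
  2:{ unfold plus, scal; simpl. unfold mult; simpl. ring. }
  apply (is_RInt_gen_ext (fun y => plus (dhh x y) (scal x (gf x y)))); try typeclasses eauto; auto.
  apply Filter_prod with (fun _ => True) (fun _ => True); try (apply filter_true).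
  intros s t _ _ u _. unfold plus, scal; simpl. unfold mult; simpl.
  unfold dhh, gf. replace (x + 1 - 1) with x by ring. ring.
Qed.

Lemma rGamma_succ x : 1 <= x -> rGamma (x + 1) = rGamma x / x.
Proof.
  intros Hx. unfold rGamma.
  destruct (Rlt_dec 0 (x+1)); [|lra]. destruct (Rlt_dec 0 x); [|lra].
  rewrite Gamma_succ by auto. rewrite Rinv_mult. unfold Rdiv. ring.
Qed.


Lemma gen_le (f : R -> R) a b c l B : a < c < b ->
  is_RInt_gen f (at_right a) (at_left b) l ->
  (forall s t, a < s < c -> c < t < b -> ex_RInt f s t /\ Rabs (RInt f s t) <= B) ->
  Rabs l <= B.
Proof.
  intros Hc Hl HB. apply Rnot_lt_le. intros Hlt.
  assert (He : 0 < Rabs l - B) by lra.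
  unfold is_RInt_gen in Hl. rewrite filterlimi_locally in Hl. specialize (Hl (mkposreal _ He)).
  assert (Hq : filter_prod (at_right a) (at_left b) (fun ab => a < fst ab < c /\ c < snd ab < b)).
  { apply Filter_prod with (fun s => a < s < c) (fun t => c < t < b).
    - assert (Hd : 0 < c - a) by lra. exists (mkposreal _ Hd). intros x Hx Hax.
      assert (Hx' : Rabs (x - a) < c - a) by exact Hx. apply Rabs_def2 in Hx'. lra.
    - assert (Hd : 0 < b - c) by lra. exists (mkposreal _ Hd). intros x Hx Hax.
      assert (Hx' : Rabs (x - b) < b - c) by exact Hx. apply Rabs_def2 in Hx'. lra.
    - intros; simpl; auto. }
  destruct (Hierarchy.filter_ex _ (filter_and _ _ Hl Hq)) as [[s t] [[z [Hz1 Hz2]] [Hs Ht]]].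
  simpl in *. destruct (HB s t Hs Ht) as [Hex Hb].
  rewrite (is_RInt_unique _ _ _ _ Hz1) in Hb.
  assert (Hz : Rabs (z - l) < Rabs l - B) by exact Hz2.
  assert (Rabs l <= Rabs z + Rabs (z - l)).
  { replace l with (z - (z - l)) at 1 by ring. 
    eapply Rle_trans. apply Rabs_triang. rewrite Rabs_Ropp. lra. }
  simpl in *. lra.
Qed.

Definition jf (n : nat) (q u : R) := Rpower u (INR n + q) * Rpower (1 - u) (- q) / (1 + u).

Lemma jf_cont n q u : 0 < u < 1 -> continuous (jf n q) u.
Proof. intros Hu. apply (@ex_derive_continuous R_AbsRing R_NormedModule).
  unfold jf, Rpower. auto_derive. repeat split; lra. Qed.

Lemma jf_pos n q u : 0 < u -> 0 <= jf n q u.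
Proof. intros. unfold jf, Rpower. apply Rmult_le_pos. apply Rmult_le_pos; left; apply exp_pos.
  left; apply Rinv_0_lt_compat; lra. Qed.

Lemma jf_ex n q s t : 0 < s < 1 -> 0 < t < 1 -> ex_RInt (jf n q) s t.
Proof. intros. eapply exR_ab; eauto. intros; apply jf_cont; auto. Qed.

Lemma int_pow c s t : 0 < c -> 0 < s -> 0 < t ->
  is_RInt (fun u => Rpower u c) s t ((Rpower t (c+1) - Rpower s (c+1)) / (c+1)).
Proof.
  intros Hc Hs Ht.
  set (F := fun u => Rpower u (c+1) / (c+1)).
  replace ((Rpower t (c+1) - Rpower s (c+1)) / (c+1)) with (minus (F t) (F s)).
  2:{ unfold F, minus, plus, opp. simpl. field. lra. }
  apply (@is_RInt_derive R_CompleteNormedModule).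
  - intros u Hu. assert (0 < u) by (eapply minmax_in'; [exact Hs|exact Ht|exact Hu]).
    unfold F, Rpower. auto_derive. lra.
    match goal with |- ?a = ?b => change (@eq R a b) end.
    replace ((c + 1) * ln u) with (c * ln u + ln u) by ring.
    rewrite exp_plus, exp_ln by auto. field. lra.
  - intros u Hu. assert (0 < u) by (eapply minmax_in'; [exact Hs|exact Ht|exact Hu]).
    apply (@ex_derive_continuous R_AbsRing R_NormedModule). unfold Rpower. auto_derive. lra.
Qed.

Lemma Rpower_le1 u c : 0 < u <= 1 -> 0 <= c -> Rpower u c <= 1.
Proof. intros. unfold Rpower. rewrite <- exp_0. apply exp_mono.
  assert (ln u <= 0) by (rewrite <- ln_1; apply ln_le; lra). nra. Qed.

Lemma int_pow_le c s t : 0 < c -> 0 < s <= t -> t <= 1 ->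
  RInt (fun u => Rpower u c) s t <= 1 / (c+1).
Proof.
  intros Hc Hs Ht. rewrite (is_RInt_unique _ _ _ _ (int_pow c s t Hc ltac:(lra) ltac:(lra))).
  assert (Rpower t (c+1) <= 1) by (apply Rpower_le1; lra).
  assert (0 < Rpower s (c+1)) by apply exp_pos.
  unfold Rdiv. apply Rmult_le_compat_r. left; apply Rinv_0_lt_compat; lra. lra.
Qed.

Lemma int_1mpow q s t : q < 1 -> s < 1 -> t < 1 ->
  is_RInt (fun u => Rpower (1 - u) (- q)) s t
    ((Rpower (1 - s) (1 - q) - Rpower (1 - t) (1 - q)) / (1 - q)).
Proof.
  intros Hq Hs Ht.
  set (F := fun u => - Rpower (1 - u) (1 - q) / (1 - q)).
  replace ((Rpower (1 - s) (1 - q) - Rpower (1 - t) (1 - q)) / (1 - q)) with (minus (F t) (F s)).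
  2:{ unfold F, minus, plus, opp. simpl. field. lra. }
  apply (@is_RInt_derive R_CompleteNormedModule).
  - intros u Hu. assert (u < 1) by (unfold Rmin, Rmax in Hu; destruct (Rle_dec s t); lra).
    unfold F, Rpower. auto_derive. lra.
    match goal with |- ?a = ?b => change (@eq R a b) end.
    replace (1 + - u) with (1 - u) by ring.
    replace ((1 - q) * ln (1 - u)) with (- q * ln (1 - u) + ln (1 - u)) by ring.
    rewrite exp_plus, exp_ln by lra. field. lra.
  - intros u Hu. assert (u < 1) by (unfold Rmin, Rmax in Hu; destruct (Rle_dec s t); lra).
    apply (@ex_derive_continuous R_AbsRing R_NormedModule). unfold Rpower. auto_derive. lra.
Qed.


Lemma INR_ge2 n : (2 <= n)%nat -> 2 <= INR n.
Proof. intros. replace 2 with (INR 2) by (simpl; ring). apply le_INR; auto. Qed.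

Definition Cn (q : R) := 2 * exp (- q * ln (- 2 * q) + q + (1 - q) * ln 2).

Lemma jf_pt_neg n q u : (2 <= n)%nat -> -1 <= q < 0 -> 0 < u < 1 ->
  jf n q u <= exp (- q * ln (- 2 * q) + q + q * ln (INR n + q)) * Rpower u ((INR n + q)/2).
Proof.
  intros Hn Hq Hu. assert (Hn2 := INR_ge2 n Hn).
  set (m := INR n + q). assert (Hm : 0 < m) by (unfold m; lra).
  set (p := - q). assert (Hp : 0 < p) by (unfold p; lra).
  set (v := 1 - u). assert (Hv : 0 < v) by (unfold v; lra).
  unfold jf. fold m. fold v.
  assert (H1 : Rpower u m * Rpower v (- q) / (1 + u) <= Rpower u m * Rpower v (- q)).
  { assert (0 <= Rpower u m * Rpower v (- q)) by (apply Rmult_le_pos; left; apply exp_pos).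
    unfold Rdiv. replace (Rpower u m * Rpower v (- q)) with (Rpower u m * Rpower v (- q) * 1) at 2 by ring.
    apply Rmult_le_compat_l; auto.
    rewrite <- Rinv_1. apply Rinv_le_contravar; lra. }
  eapply Rle_trans; [exact H1|]. clear H1.
  unfold Rpower. rewrite <- !exp_plus. apply exp_mono.
  assert (A : ln u <= - v) by (assert (H := ln_le_sub1 u ltac:(lra)); unfold v; lra).
  assert (A' : (m/2) * ln u <= (m/2) * (- v)) by (apply Rmult_le_compat_l; lra).
  assert (B := ln_le_sub1 (m * v / (2 * p)) ltac:(apply Rdiv_lt_0_compat; nra)).
  rewrite ln_div, ln_mult in B by nra.
  assert (B' : p * (ln m + ln v - ln (2 * p)) <= p * (m * v / (2 * p) - 1)) by (apply Rmult_le_compat_l; lra).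
  replace (p * (m * v / (2 * p) - 1)) with (m * v / 2 - p) in B' by (field; lra).
  replace (- q) with p by (unfold p; ring). replace q with (- p) by (unfold p; ring).
  replace (- 2 * - p) with (2 * p) by ring.
  replace ((m / 2) * (- v)) with (- (m * v / 2)) in A' by field.
  nra.
Qed.

Lemma jbound_neg n q s t : (2 <= n)%nat -> -1 <= q < 0 -> 0 < s <= t -> t < 1 ->
  RInt (jf n q) s t <= Cn q * exp ((q - 1) * ln (INR n)).
Proof.
  intros Hn Hq Hs Ht. assert (Hn2 := INR_ge2 n Hn).
  set (m := INR n + q). assert (Hm : INR n / 2 <= m) by (unfold m; lra).
  set (E := exp (- q * ln (- 2 * q) + q + q * ln m)).
  assert (HE : 0 < E) by apply exp_pos.
  assert (Hi := int_pow (m/2) s t ltac:(lra) ltac:(lra) ltac:(lra)).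
  assert (Hi2 : is_RInt (fun u => E * Rpower u (m/2)) s t
     (E * ((Rpower t (m / 2 + 1) - Rpower s (m / 2 + 1)) / (m / 2 + 1)))).
  { apply (is_RInt_scal _ _ _ E _ Hi). }
  assert (Hle := is_RInt_le (jf n q) _ s t _ _ ltac:(lra)
      (@RInt_correct R_CompleteNormedModule _ _ _ (jf_ex n q s t ltac:(lra) ltac:(lra))) Hi2).
  eapply Rle_trans. apply Hle. { intros u Hu. apply jf_pt_neg; auto; lra. }
  clear Hle Hi2.
  rewrite <- (is_RInt_unique _ _ _ _ Hi).
  assert (Hb := int_pow_le (m/2) s t ltac:(lra) ltac:(lra) ltac:(lra)).
  apply Rle_trans with (E * (1 / (m/2+1))). { apply Rmult_le_compat_l; lra. }
  apply Rle_trans with (2 * E * / m).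
  { replace (1 / (m/2+1)) with (2 / (m + 2)) by (field; lra). unfold Rdiv.
    rewrite <- Rmult_assoc. replace (E * 2) with (2 * E) by ring. apply Rmult_le_compat_l; [lra|].
    apply Rinv_le_contravar; lra. }
  assert (Hmi : / m = exp (- ln m)) by (rewrite exp_Ropp, exp_ln; auto; lra).
  rewrite Hmi. unfold E, Cn. rewrite Rmult_assoc, <- exp_plus, Rmult_assoc, <- exp_plus.
  apply Rmult_le_compat_l; [lra|]. apply exp_mono.
  assert (Hl : ln (INR n) - ln 2 <= ln m).
  { rewrite <- ln_div by lra. apply ln_le. apply Rdiv_lt_0_compat; lra. lra. }
  nra.
Qed.

Lemma jbound_pos n q s t : (2 <= n)%nat -> 0 <= q < 1 -> 0 < s < 1 - / INR n ->
  1 - / INR n < t < 1 ->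
  RInt (jf n q) s t <= (1 + / (1 - q)) * exp ((q - 1) * ln (INR n)).
Proof.
  intros Hn Hq Hs Ht. assert (Hn2 := INR_ge2 n Hn).
  set (m0 := 1 - / INR n) in *.
  assert (Hinv : 0 < / INR n) by (apply Rinv_0_lt_compat; lra).
  assert (Hinv2 : / INR n <= 1/2) by (unfold Rdiv; rewrite Rmult_1_l; apply Rinv_le_contravar; lra).
  rewrite (chas _ s m0 t) by (apply jf_ex; unfold m0 in *; lra).
  assert (P1 : RInt (jf n q) s m0 <= exp ((q - 1) * ln (INR n))).
  { set (K := exp (q * ln (INR n))).
    assert (Hi := int_pow (INR n + q) s m0 ltac:(lra) ltac:(lra) ltac:(unfold m0; lra)).
    assert (Hi2 := is_RInt_scal _ _ _ K _ Hi).
    assert (Hle := is_RInt_le (jf n q) (fun u => scal K (Rpower u (INR n + q))) s m0 _ _ ltac:(lra)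
      (@RInt_correct R_CompleteNormedModule _ _ _ (jf_ex n q s m0 ltac:(lra) ltac:(unfold m0; lra))) Hi2).
    eapply Rle_trans. apply Hle.
    { intros u Hu. change (scal K (Rpower u (INR n + q))) with (K * Rpower u (INR n + q)).
      unfold jf.
      assert (Hv : / INR n <= 1 - u) by (unfold m0 in Hu; lra).
      assert (H1 : Rpower (1 - u) (- q) <= K).
      { unfold Rpower, K. apply exp_mono.
        assert (ln (/ INR n) <= ln (1 - u)) by (apply ln_le; lra).
        rewrite ln_Rinv in H by lra. nra. }
      assert (H2 : 0 <= Rpower u (INR n + q)) by (left; apply exp_pos).
      assert (H3 : 0 < / (1 + u) <= 1) by (split; [apply Rinv_0_lt_compat; lra| rewrite <- Rinv_1; apply Rinv_le_contravar; lra]).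
      assert (0 <= Rpower (1 - u) (- q)) by (left; apply exp_pos).
      unfold Rdiv. apply Rle_trans with (Rpower u (INR n + q) * Rpower (1 - u) (- q)).
      { replace (Rpower u (INR n + q) * Rpower (1 - u) (- q)) with (Rpower u (INR n + q) * Rpower (1 - u) (- q) * 1) at 2 by ring.
        apply Rmult_le_compat_l; [apply Rmult_le_pos|]; lra. }
      rewrite Rmult_comm. apply Rmult_le_compat_r; lra. }
    change (scal K ((Rpower m0 (INR n + q + 1) - Rpower s (INR n + q + 1)) / (INR n + q + 1)))
      with (K * ((Rpower m0 (INR n + q + 1) - Rpower s (INR n + q + 1)) / (INR n + q + 1))).
    rewrite <- (is_RInt_unique _ _ _ _ Hi).
    assert (Hb := int_pow_le (INR n + q) s m0 ltac:(lra) ltac:(lra) ltac:(unfold m0; lra)).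
    assert (HK : 0 < K) by apply exp_pos.
    apply Rle_trans with (K * / INR n).
    { apply Rle_trans with (K * (1 / (INR n + q + 1))). apply Rmult_le_compat_l; lra.
      apply Rmult_le_compat_l; [lra|]. unfold Rdiv; rewrite Rmult_1_l. apply Rinv_le_contravar; lra. }
    unfold K. rewrite <- (exp_ln (INR n)) at 2 by lra. rewrite <- exp_Ropp, <- exp_plus.
    apply exp_mono. lra. }
  assert (P2 : RInt (jf n q) m0 t <= / (1 - q) * exp ((q - 1) * ln (INR n))).
  { assert (Hi := int_1mpow q m0 t ltac:(lra) ltac:(unfold m0; lra) ltac:(lra)).
    assert (Hle := is_RInt_le (jf n q) _ m0 t _ _ ltac:(lra)
      (@RInt_correct R_CompleteNormedModule _ _ _ (jf_ex n q m0 t ltac:(unfold m0; lra) ltac:(lra))) Hi).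
    eapply Rle_trans. apply Hle.
    { intros u Hu. unfold jf.
      assert (H1 : Rpower u (INR n + q) <= 1) by (apply Rpower_le1; lra).
      assert (H2 : 0 <= Rpower u (INR n + q)) by (left; apply exp_pos).
      assert (H3 : 0 < / (1 + u) <= 1) by (split; [apply Rinv_0_lt_compat; lra| rewrite <- Rinv_1; apply Rinv_le_contravar; lra]).
      assert (0 <= Rpower (1 - u) (- q)) by (left; apply exp_pos).
      unfold Rdiv. apply Rle_trans with (Rpower u (INR n + q) * Rpower (1 - u) (- q)).
      { replace (Rpower u (INR n + q) * Rpower (1 - u) (- q)) with (Rpower u (INR n + q) * Rpower (1 - u) (- q) * 1) at 2 by ring.
        apply Rmult_le_compat_l; [apply Rmult_le_pos|]; lra. }
      replace (Rpower (1 - u) (- q)) with (1 * Rpower (1 - u) (- q)) at 2 by ring.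
      apply Rmult_le_compat_r; lra. }
    replace (1 - m0) with (/ INR n) by (unfold m0; ring).
    assert (0 < Rpower (1 - t) (1 - q)) by apply exp_pos.
    assert (Hr : Rpower (/ INR n) (1 - q) = exp ((q - 1) * ln (INR n))).
    { unfold Rpower. rewrite ln_Rinv by lra. f_equal. ring. }
    rewrite Hr. unfold Rdiv. rewrite Rmult_comm.
    apply Rmult_le_compat_l. left; apply Rinv_0_lt_compat; lra. lra. }
  lra.
Qed.

Lemma J_gen_bound n q B : (2 <= n)%nat ->
  (forall s t, 0 < s < 1 - / INR n -> 1 - / INR n < t < 1 -> RInt (jf n q) s t <= B) ->
  Rabs (RInt_gen (jf n q) (at_right 0) (at_left 1)) <= B.
Proof.
  intros Hn HB. assert (Hn2 := INR_ge2 n Hn).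
  assert (Hinv : 0 < / INR n) by (apply Rinv_0_lt_compat; lra).
  assert (Hinv2 : / INR n <= 1/2) by (unfold Rdiv; rewrite Rmult_1_l; apply Rinv_le_contravar; lra).
  destruct (ex_gen_ab (jf n q) 0 1 (1 - / INR n) B) as [l Hl]; try lra.
  - intros; apply jf_cont; auto.
  - intros; apply jf_pos; lra.
  - auto.
  - rewrite (@is_RInt_gen_unique R_CompleteNormedModule _ _ _ _ _ _ Hl).
    apply (gen_le (jf n q) 0 1 (1 - / INR n)); auto; try lra.
    intros s t Hs Ht. split. apply jf_ex; lra.
    rewrite Rabs_pos_eq. apply HB; auto.
    apply RInt_ge_0. lra. apply jf_ex; lra. intros; apply jf_pos; lra.
Qed.

Definition CJ (q : R) := if Rlt_dec q 0 then Cn q else 1 + / (1 - q).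

Lemma J_bound n q : (2 <= n)%nat -> -1 <= q < 1 ->
  Rabs (RInt_gen (jf n q) (at_right 0) (at_left 1)) <= CJ q * exp ((q - 1) * ln (INR n)).
Proof.
  intros Hn Hq. apply J_gen_bound; auto. intros s t Hs Ht. unfold CJ.
  destruct (Rlt_dec q 0).
  - apply jbound_neg; auto; lra.
  - apply jbound_pos; auto; lra.
Qed.

Ltac toR := match goal with |- ?a = ?b => change (@eq R a b) end.

Definition alt (x : nat -> R) (K n : nat) : R := sum_n_m (fun k => (-1) ^ (n - k) * x k) K n.

Lemma alt_base x K : alt x K K = x K.
Proof. unfold alt. rewrite sum_n_n. rewrite Nat.sub_diag. simpl. toR. ring. Qed.

Lemma alt_rec x K n : (K <= n)%nat -> alt x K (S n) = x (S n) - alt x K n.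
Proof.
  intros Hn. unfold alt.
  rewrite (sum_n_m_Chasles _ K n (S n)) by lia. rewrite sum_n_n.
  rewrite Nat.sub_diag.
  rewrite (sum_n_m_ext_loc _ (fun k => mult (-1) ((-1) ^ (n - k) * x k))).
  2:{ intros k Hk. rewrite Nat.sub_succ_l by lia. simpl. unfold mult; simpl. toR. ring. }
  rewrite sum_n_m_mult_l. unfold plus, mult; simpl. change (@sum_n_m (Ring.AbelianMonoid R_Ring)) with (@sum_n_m R_AbelianMonoid). toR. ring.
Qed.

Lemma alt_ext x y K n : (forall k, (K <= k)%nat -> x k = y k) -> alt x K n = alt y K n.
Proof. intros H. unfold alt. apply sum_n_m_ext_loc. intros k Hk. rewrite H by lia. auto. Qed.

Lemma alt_lin x y c1 c2 K n : (K <= n)%nat ->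
  alt (fun k => c1 * x k + c2 * y k) K n = c1 * alt x K n + c2 * alt y K n.
Proof.
  intros Hn. induction Hn.
  - rewrite !alt_base. auto.
  - rewrite !alt_rec by auto. rewrite IHHn. ring.
Qed.

Lemma alt_dec_pos x K : (forall k, (K <= k)%nat -> 0 <= x (S k) <= x k) ->
  forall n, (K <= n)%nat -> x n - x K <= alt x K n <= x K.
Proof.
  intros H n Hn. induction Hn.
  - rewrite alt_base. specialize (H K (le_n K)). lra.
  - rewrite alt_rec by auto.
    assert (Hx : 0 <= x (S m) <= x m) by auto.
    lra.
Qed.

Lemma pos_chain x K : (forall k, (K <= k)%nat -> 0 <= x (S k) <= x k) ->
  forall n, (K <= n)%nat -> 0 <= x n.
Proof.
  intros H n Hn. induction Hn.
  - specialize (H K (le_n K)). lra.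
  - specialize (H m Hn). lra.
Qed.

Lemma alt_inc_pos x K : 0 <= x K -> (forall k, (K <= k)%nat -> x k <= x (S k)) ->
  forall n, (K <= n)%nat -> 0 <= alt x K n <= x n.
Proof.
  intros H0 H n Hn. induction Hn.
  - rewrite alt_base. lra.
  - rewrite alt_rec by auto. specialize (H m Hn). lra.
Qed.

Lemma alt_opp x K n : (K <= n)%nat -> alt (fun k => - x k) K n = - alt x K n.
Proof. intros Hn. induction Hn. rewrite !alt_base; auto. rewrite !alt_rec by auto. rewrite IHHn. ring. Qed.

Lemma ratio_sign x rho K : (forall k, (K <= k)%nat -> x (S k) = rho k * x k /\ 0 <= rho k) ->
  0 <= x K -> forall n, (K <= n)%nat -> 0 <= x n.
Proof.
  intros H H0 n Hn. induction Hn; auto. destruct (H m Hn) as [E P]. rewrite E. apply Rmult_le_pos; auto.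
Qed.

Lemma alt_dec_abs x rho K n : (forall k, (K <= k)%nat -> x (S k) = rho k * x k /\ 0 <= rho k <= 1) ->
  (K <= n)%nat -> Rabs (alt x K n) <= Rabs (x K).
Proof.
  intros H Hn. destruct (Rle_or_lt 0 (x K)) as [Hp|Hneg].
  - assert (Hs : forall n, (K <= n)%nat -> 0 <= x n).
    { apply ratio_sign with rho; auto. intros k Hk; destruct (H k Hk); split; lra. }
    assert (Hd : forall k, (K <= k)%nat -> 0 <= x (S k) <= x k).
    { intros k Hk. destruct (H k Hk) as [E P]. assert (0 <= x k) by auto. rewrite E. split; nra. }
    assert (Hb := alt_dec_pos x K Hd n Hn). assert (0 <= x n) by auto.
    rewrite (Rabs_pos_eq (x K)) by auto. apply Rabs_le. lra.
  - set (y := fun k => - x k).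
    assert (Hs : forall n, (K <= n)%nat -> 0 <= y n).
    { apply ratio_sign with rho; auto. intros k Hk; destruct (H k Hk) as [E P]; unfold y; rewrite E; split; [ring|lra].
      unfold y; lra. }
    assert (Hd : forall k, (K <= k)%nat -> 0 <= y (S k) <= y k).
    { intros k Hk. destruct (H k Hk) as [E P]. assert (0 <= y k) by auto. unfold y in *. rewrite E. split; nra. }
    assert (Hb := alt_dec_pos y K Hd n Hn). assert (0 <= y n) by auto.
    assert (Ha : alt y K n = - alt x K n) by (apply alt_opp; auto). rewrite Ha in Hb. unfold y in *.
    rewrite (Rabs_left (x K)) by auto. apply Rabs_le. lra.
Qed.

Lemma alt_inc_abs x rho K n : (forall k, (K <= k)%nat -> x (S k) = rho k * x k /\ 1 <= rho k) ->
  (K <= n)%nat -> Rabs (alt x K n) <= Rabs (x n).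
Proof.
  intros H Hn. destruct (Rle_or_lt 0 (x K)) as [Hp|Hneg].
  - assert (Hs : forall n, (K <= n)%nat -> 0 <= x n).
    { apply ratio_sign with rho; auto. intros k Hk; destruct (H k Hk); split; lra. }
    assert (Hd : forall k, (K <= k)%nat -> x k <= x (S k)).
    { intros k Hk. destruct (H k Hk) as [E P]. assert (0 <= x k) by auto. rewrite E. nra. }
    assert (Hb := alt_inc_pos x K Hp Hd n Hn). assert (0 <= x n) by auto.
    rewrite (Rabs_pos_eq (x n)) by auto. apply Rabs_le. lra.
  - set (y := fun k => - x k).
    assert (Hs : forall n, (K <= n)%nat -> 0 <= y n).
    { apply ratio_sign with rho; auto. intros k Hk; destruct (H k Hk) as [E P]; unfold y; rewrite E; split; [ring|lra].
      unfold y; lra. }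
    assert (Hd : forall k, (K <= k)%nat -> y k <= y (S k)).
    { intros k Hk. destruct (H k Hk) as [E P]. assert (0 <= y k) by auto. unfold y in *. rewrite E. nra. }
    assert (Hb := alt_inc_pos y K ltac:(unfold y; lra) Hd n Hn). assert (0 <= y n) by auto.
    assert (Ha : alt y K n = - alt x K n) by (apply alt_opp; auto). rewrite Ha in Hb. unfold y in *.
    rewrite (Rabs_left1 (x n)) by lra. apply Rabs_le. lra.
Qed.

Definition hk (k : nat) : R := sum_n_m (fun j => / INR j) 1 k.

Lemma hk_S k : hk (S k) = hk k + / INR (S k).
Proof. unfold hk. rewrite sum_n_Sm by lia. reflexivity. Qed.

Lemma hk_0 : hk 0 = 0.
Proof. unfold hk. rewrite sum_n_m_zero by lia. reflexivity. Qed.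

Lemma hk_le k : (1 <= k)%nat -> hk k <= 1 + ln (INR k).
Proof.
  intros Hk. induction Hk.
  - unfold hk. rewrite sum_n_n. simpl. rewrite ln_1. lra.
  - rewrite hk_S. rewrite S_INR.
    assert (Hm : 1 <= INR m) by (replace 1 with (INR 1) by auto; apply le_INR; auto).
    assert (H := ln_le_sub1 (INR m / (INR m + 1)) ltac:(apply Rdiv_lt_0_compat; lra)).
    rewrite ln_div in H by lra.
    replace (INR m / (INR m + 1) - 1) with (- / (INR m + 1)) in H by (field; lra).
    lra.
Qed.

Lemma hk_ge k : (1 <= k)%nat -> 2 * INR k / (INR k + 1) <= hk k.
Proof.
  intros Hk. induction Hk.
  - unfold hk. rewrite sum_n_n. simpl. lra.
  - rewrite hk_S. rewrite S_INR.
    assert (Hm : 1 <= INR m) by (replace 1 with (INR 1) by auto; apply le_INR; auto).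
    apply Rle_trans with (2 * INR m / (INR m + 1) + / (INR m + 1)); [|lra].
    apply Rmult_le_reg_r with ((INR m + 1) * (INR m + 1 + 1)). nra.
    field_simplify; try lra.
Qed.


Definition term (q : R) (k : nat) : R := Hfun k q * Ifun k q / (INR k ^ 2).
Definition Aq (q : R) (k : nat) : R := Ifun k q / INR k.
Definition rq (q : R) (k : nat) : R := poch (2 * q) k / INR (Factorial.fact k).
Definition Bq (q : R) (k : nat) : R := rq q k * Aq q k.

Lemma INR_pos k : (1 <= k)%nat -> 1 <= INR k.
Proof. intros. replace 1 with (INR 1) by auto. apply le_INR; auto. Qed.

Lemma Ifun_S k q : (2 <= k)%nat -> -1 <= q ->
  Ifun (S k) q = Ifun k q * (INR k + 1) / (INR k + q).
Proof.
  intros Hk Hq. assert (H2 := INR_ge2 k Hk). unfold Ifun.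
  rewrite fact_simpl, mult_INR, S_INR.
  replace (INR k + 1 + q) with ((INR k + q) + 1) by ring.
  rewrite rGamma_succ by lra. field. lra.
Qed.

Lemma Aq_S k q : (2 <= k)%nat -> -1 <= q -> Aq q (S k) = (INR k / (INR k + q)) * Aq q k.
Proof.
  intros Hk Hq. assert (H2 := INR_ge2 k Hk). unfold Aq. rewrite Ifun_S by auto.
  rewrite S_INR. field. lra.
Qed.

Lemma rq_S k q : rq q (S k) = ((2 * q + INR k) / (INR k + 1)) * rq q k.
Proof.
  unfold rq. simpl poch. rewrite fact_simpl, mult_INR, S_INR.
  assert (0 < INR (Factorial.fact k)) by (apply lt_0_INR; apply Factorial.lt_O_fact).
  assert (0 <= INR k) by apply pos_INR. field. lra.
Qed.

Lemma Bq_S k q : (2 <= k)%nat -> -1 <= q ->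
  Bq q (S k) = (((2 * q + INR k) / (INR k + 1)) * (INR k / (INR k + q))) * Bq q k.
Proof. intros. unfold Bq. rewrite rq_S, Aq_S by auto. ring. Qed.

Lemma term_decomp q k : q <> 1/2 -> (1 <= k)%nat ->
  term q k = / (2 * q - 1) * Bq q k + (- / (2 * q - 1)) * Aq q k.
Proof.
  intros Hq Hk. assert (H1 := INR_pos k Hk). unfold term, Hfun, Bq, Aq, rq.
  destruct (Req_EM_T q (1/2)); [contradiction|].
  assert (2 * q - 1 <> 0) by (intro; apply Hq; lra).
  assert (0 < INR (Factorial.fact k)) by (apply lt_0_INR; apply Factorial.lt_O_fact).
  field. repeat split; lra.
Qed.

Lemma term_half k : (1 <= k)%nat -> term (1/2) k = hk k * Aq (1/2) k.
Proof.
  intros Hk. assert (H1 := INR_pos k Hk). unfold term, Hfun, Aq.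
  destruct (Req_EM_T (1/2) (1/2)); [|congruence]. fold (hk k). field. lra.
Qed.

Lemma sum_split q n : (2 <= n)%nat ->
  sum_n_m (fun k => (-1) ^ (n - k) * Hfun k q * Ifun k q / (INR k ^ 2)) 1 n
  = (-1) ^ (n - 1) * term q 1 + alt (term q) 2 n.
Proof.
  intros Hn. rewrite (sum_n_m_Chasles _ 1 1 n) by lia. rewrite sum_n_n.
  unfold alt, term. unfold plus; simpl. f_equal.
  - unfold Rdiv. ring.
  - apply sum_n_m_ext. intros k. match goal with |- ?a = ?b => change (@eq R a b) end. unfold Rdiv. ring.
Qed.

Lemma sum_abs q n : (2 <= n)%nat ->
  Rabs (sum_n_m (fun k => (-1) ^ (n - k) * Hfun k q * Ifun k q / (INR k ^ 2)) 1 n)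
  <= Rabs (term q 1) + Rabs (alt (term q) 2 n).
Proof.
  intros Hn. rewrite sum_split by auto.
  eapply Rle_trans. apply Rabs_triang. rewrite Rabs_mult, pow_1_abs. lra.
Qed.


Lemma rhoA_nonneg k q : (2 <= k)%nat -> -1 <= q -> 0 <= INR k / (INR k + q).
Proof. intros Hk Hq. assert (H2 := INR_ge2 k Hk). apply Rdiv_le_0_compat; lra. Qed.

Lemma rhoB_range k q : (2 <= k)%nat -> -1 <= q < 1 ->
  0 <= ((2 * q + INR k) / (INR k + 1)) * (INR k / (INR k + q)) <= 1.
Proof.
  intros Hk Hq. assert (H2 := INR_ge2 k Hk). split.
  - apply Rmult_le_pos; apply Rdiv_le_0_compat; lra.
  - replace (((2 * q + INR k) / (INR k + 1)) * (INR k / (INR k + q))) with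
      ((2 * q + INR k) * INR k / ((INR k + 1) * (INR k + q))) by (field; lra).
    apply Rmult_le_reg_r with ((INR k + 1) * (INR k + q)). nra.
    unfold Rdiv. rewrite Rmult_assoc, Rinv_l by nra. nra.
Qed.

Lemma alt_decomp q n : q <> 1/2 -> -1 <= q -> (2 <= n)%nat ->
  alt (term q) 2 n = / (2 * q - 1) * alt (Bq q) 2 n + (- / (2 * q - 1)) * alt (Aq q) 2 n.
Proof.
  intros Hq Hq1 Hn. rewrite <- alt_lin by auto. apply alt_ext. intros k Hk.
  apply term_decomp; auto; lia.
Qed.

Lemma altB_bound q n : -1 <= q < 1 -> (2 <= n)%nat -> Rabs (alt (Bq q) 2 n) <= Rabs (Bq q 2).
Proof.
  intros Hq Hn. apply alt_dec_abs with (fun k => ((2 * q + INR k) / (INR k + 1)) * (INR k / (INR k + q))); auto.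
  intros k Hk. split. apply Bq_S; auto; lra. apply rhoB_range; auto.
Qed.

Lemma S_bound_nonneg q : 0 <= q < 1 -> exists K, 0 <= K /\
  forall n, (2 <= n)%nat -> Rabs (alt (term q) 2 n) <= K.
Proof.
  intros Hq. destruct (Req_EM_T q (1/2)) as [Hh|Hh].
  - subst q. exists (Rabs (term (1/2) 2)). split. apply Rabs_pos.
    intros n Hn. apply alt_dec_abs with (fun k => (hk (S k) / hk k) * (INR k / (INR k + 1/2))); auto.
    intros k Hk. assert (H2 := INR_ge2 k Hk).
    assert (Hg := hk_ge k ltac:(lia)).
    assert (Hp : 0 < 2 * INR k / (INR k + 1)) by (apply Rdiv_lt_0_compat; lra).
    assert (Hs := hk_S k). rewrite S_INR in Hs.
    assert (Hi : 0 < / (INR k + 1)) by (apply Rinv_0_lt_compat; lra).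
    split.
    + rewrite !term_half by lia. rewrite Aq_S by (auto; lra). field. split; lra.
    + split. apply Rmult_le_pos; apply Rdiv_le_0_compat; lra.
      rewrite Hs. replace ((hk k + / (INR k + 1)) / hk k * (INR k / (INR k + 1 / 2))) with
        (2 * INR k * (hk k + / (INR k + 1)) / (hk k * (2 * INR k + 1))) by (field; lra).
      apply Rmult_le_reg_r with (hk k * (2 * INR k + 1)). nra.
      unfold Rdiv. rewrite Rmult_assoc, Rinv_l by nra.
      assert (INR k * / (INR k + 1) <= hk k / 2).
      { apply Rmult_le_reg_l with 2. lra. unfold Rdiv in Hg. lra. }
      nra.
  - set (c := / (2 * q - 1)).
    exists (Rabs c * Rabs (Bq q 2) + Rabs (- c) * Rabs (Aq q 2)). split.
    { apply Rplus_le_le_0_compat; apply Rmult_le_pos; apply Rabs_pos. }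
    intros n Hn. rewrite alt_decomp by (auto; lra). fold c.
    eapply Rle_trans. apply Rabs_triang. rewrite !Rabs_mult.
    apply Rplus_le_compat; apply Rmult_le_compat_l; try apply Rabs_pos.
    + apply altB_bound; auto; lra.
    + apply alt_dec_abs with (fun k => INR k / (INR k + q)); auto.
      intros k Hk. assert (H2 := INR_ge2 k Hk). split. apply Aq_S; auto; lra.
      split. apply rhoA_nonneg; auto; lra.
      apply Rmult_le_reg_r with (INR k + q). lra. unfold Rdiv. rewrite Rmult_assoc, Rinv_l by lra. lra.
Qed.

Lemma Aq_growth q : -1 <= q < 0 -> forall k,
  Rabs (Aq q (S (S k))) <= Rabs (Aq q 2) * exp (- q * hk k).
Proof.
  intros Hq k. induction k.
  - rewrite hk_0. rewrite Rmult_0_r, exp_0. lra.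
  - rewrite Aq_S by (auto; lia || lra). rewrite Rabs_mult.
    rewrite hk_S. rewrite !S_INR.
    assert (Hk0 := pos_INR k).
    assert (Hr : INR k + 1 + 1 <= (INR k + 1 + 1) / (INR k + 1 + 1 + q) * (INR k + 1 + 1 + q)) by (right; field; lra).
    assert (Hrho : (INR k + 1 + 1) / (INR k + 1 + 1 + q) <= exp (- q * / (INR k + 1))).
    { replace ((INR k + 1 + 1) / (INR k + 1 + 1 + q)) with (1 + (- q / (INR k + 1 + 1 + q))) by (field; lra).
      eapply Rle_trans. apply exp_ineq1_le. apply exp_mono.
      unfold Rdiv. apply Rmult_le_compat_l. lra.
      apply Rinv_le_contravar; lra. }
    rewrite Rabs_pos_eq by (apply Rdiv_le_0_compat; lra).
    replace (- q * (hk k + / (INR k + 1))) with (- q * hk k + - q * / (INR k + 1)) by ring.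
    rewrite exp_plus.
    assert (0 <= Rabs (Aq q (S (S k)))) by apply Rabs_pos.
    assert (0 <= (INR k + 1 + 1) / (INR k + 1 + 1 + q)) by (apply Rdiv_le_0_compat; lra).
    assert (0 < exp (- q * / (INR k + 1))) by apply exp_pos.
    assert (0 < exp (- q * hk k)) by apply exp_pos.
    replace (Rabs (Aq q 2) * (exp (- q * hk k) * exp (- q * / (INR k + 1)))) with
       ((Rabs (Aq q 2) * exp (- q * hk k)) * exp (- q * / (INR k + 1))) by ring.
    rewrite Rmult_comm. apply Rmult_le_compat; auto.
Qed.

Lemma S_bound_neg q : -1 <= q < 0 -> exists K1 K2, 0 <= K1 /\ 0 <= K2 /\
  forall n, (2 <= n)%nat -> Rabs (alt (term q) 2 n) <= K1 + K2 * exp (- q * ln (INR n)).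
Proof.
  intros Hq. set (c := / (2 * q - 1)).
  exists (Rabs c * Rabs (Bq q 2)), (Rabs (- c) * (Rabs (Aq q 2) * exp (- q))).
  split. apply Rmult_le_pos; apply Rabs_pos.
  split. apply Rmult_le_pos. apply Rabs_pos. apply Rmult_le_pos. apply Rabs_pos. left; apply exp_pos.
  intros n Hn. rewrite alt_decomp by (auto; lra). fold c.
  eapply Rle_trans. apply Rabs_triang. rewrite !Rabs_mult.
  apply Rplus_le_compat; [apply Rmult_le_compat_l; [apply Rabs_pos|apply altB_bound; auto; lra]|].
  rewrite Rmult_assoc. apply Rmult_le_compat_l. apply Rabs_pos.
  eapply Rle_trans.
  { apply alt_inc_abs with (fun k => INR k / (INR k + q)); auto.
    intros k Hk. assert (H2 := INR_ge2 k Hk). split. apply Aq_S; auto; lra.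
    apply Rmult_le_reg_r with (INR k + q). lra. unfold Rdiv. rewrite Rmult_assoc, Rinv_l by lra. lra. }
  destruct n as [|[|k]]; try lia.
  eapply Rle_trans. apply Aq_growth; auto.
  rewrite Rmult_assoc. apply Rmult_le_compat_l. apply Rabs_pos.
  rewrite <- exp_plus. apply exp_mono.
  assert (HN := INR_ge2 (S (S k)) Hn).
  assert (Hl : 0 <= ln (INR (S (S k)))) by (apply ln_nonneg; lra).
  assert (Hh : hk k <= 1 + ln (INR (S (S k)))).
  { destruct k as [|k'].
    - rewrite hk_0. lra.
    - eapply Rle_trans. apply hk_le. lia. apply Rplus_le_compat_l. apply ln_le.
      assert (H1 := INR_pos (S k') ltac:(lia)). lra. apply le_INR. lia. }
  nra.
Qed.


Lemma T2_bound n q : (2 <= n)%nat -> -1 <= q < 1 ->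
  Rabs (T2 n q) <= CJ q * exp ((q - 1) * ln (INR n)) * (Rabs (term q 1) + Rabs (alt (term q) 2 n)).
Proof.
  intros Hn Hq.
  change (T2 n q) with (RInt_gen (jf n q) (at_right 0) (at_left 1) *
     sum_n_m (fun k => (-1) ^ (n - k) * Hfun k q * Ifun k q / (INR k ^ 2)) 1 n).
  rewrite Rabs_mult. apply Rmult_le_compat; try apply Rabs_pos.
  - apply J_bound; auto.
  - apply sum_abs; auto.
Qed.

Lemma CJ_nonneg q n : (2 <= n)%nat -> -1 <= q < 1 -> 0 <= CJ q.
Proof.
  intros. unfold CJ. destruct (Rlt_dec q 0).
  - unfold Cn. assert (0 < exp (- q * ln (- 2 * q) + q + (1 - q) * ln 2)) by apply exp_pos. lra.
  - assert (0 < / (1 - q)) by (apply Rinv_0_lt_compat; lra). lra.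
Qed.

Theorem lemma3p7 :
  (forall q : R, -1 <= q < 0 ->
     exists C : R, exists N : nat, forall n : nat, (N <= n)%nat ->
       Rabs (T2 n q) <= C * / INR n) /\
  (exists C : R, exists N : nat, forall n : nat, (N <= n)%nat ->
       Rabs (T2 n 0) <= C * (ln (INR n) / INR n)) /\
  (forall q : R, 0 < q < 1 ->
     exists C : R, exists N : nat, forall n : nat, (N <= n)%nat ->
       Rabs (T2 n q) <= C * Rpower (INR n) (q - 1)).
Proof.
  split; [|split].
  - intros q Hq. destruct (S_bound_neg q Hq) as [K1 [K2 [HK1 [HK2 HS]]]].
    assert (HC := CJ_nonneg q 2 (le_n 2) ltac:(lra)).
    exists (CJ q * (Rabs (term q 1) + K1 + K2)), 2%nat. intros n Hn.
    assert (HN := INR_ge2 n Hn).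
    assert (HL : 0 <= ln (INR n)) by (apply ln_nonneg; lra).
    set (L := ln (INR n)) in *.
    assert (Hinv : / INR n = exp (- L)) by (unfold L; rewrite exp_Ropp, exp_ln; lra).
    eapply Rle_trans. apply T2_bound; auto; lra.
    assert (Hs := HS n Hn). try fold L in Hs.
    assert (E1 : exp ((q - 1) * L) <= exp (- L)) by (apply exp_mono; nra).
    assert (E2 : exp ((q - 1) * L) * exp (- q * L) = exp (- L)) by (rewrite <- exp_plus; f_equal; ring).
    assert (0 < exp ((q - 1) * L)) by apply exp_pos.
    assert (0 < exp (- L)) by apply exp_pos.
    assert (0 <= Rabs (term q 1)) by apply Rabs_pos.
    rewrite Hinv.
    apply Rle_trans with (CJ q * exp ((q - 1) * L) * (Rabs (term q 1) + (K1 + K2 * exp (- q * L)))).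
    { fold L. apply Rmult_le_compat_l. apply Rmult_le_pos; lra. lra. }
    replace (CJ q * exp ((q - 1) * L) * (Rabs (term q 1) + (K1 + K2 * exp (- q * L)))) with
      (CJ q * (exp ((q - 1) * L) * (Rabs (term q 1) + K1) + K2 * (exp ((q - 1) * L) * exp (- q * L)))) by ring.
    rewrite E2. replace (CJ q * (Rabs (term q 1) + K1 + K2) * exp (- L)) with
      (CJ q * (exp (- L) * (Rabs (term q 1) + K1) + K2 * exp (- L))) by ring.
    apply Rmult_le_compat_l; auto. apply Rplus_le_compat_r. apply Rmult_le_compat_r; lra.
  - destruct (S_bound_nonneg 0 ltac:(lra)) as [K [HK HS]].
    assert (HC := CJ_nonneg 0 2 (le_n 2) ltac:(lra)).
    exists (CJ 0 * (Rabs (term 0 1) + K)), 3%nat. intros n Hn.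
    assert (HN := INR_ge2 n ltac:(lia)).
    assert (H3 : 3 <= INR n) by (replace 3 with (INR 3) by (simpl; ring); apply le_INR; auto).
    assert (HL : 1 <= ln (INR n)).
    { rewrite <- (ln_exp 1). apply ln_le. apply exp_pos. assert (H := exp_le_3). lra. }
    set (L := ln (INR n)) in *.
    assert (Hinv : / INR n = exp (- L)) by (unfold L; rewrite exp_Ropp, exp_ln; lra).
    eapply Rle_trans. apply T2_bound; auto; lia || lra. fold L.
    assert (Hs := HS n ltac:(lia)). try fold L in Hs.
    replace ((0 - 1) * L) with (- L) by ring.
    unfold Rdiv. rewrite Hinv.
    assert (0 < exp (- L)) by apply exp_pos.
    assert (0 <= Rabs (term 0 1)) by apply Rabs_pos.
    apply Rle_trans with (CJ 0 * exp (- L) * (Rabs (term 0 1) + K)).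
    { apply Rmult_le_compat_l. apply Rmult_le_pos; lra. lra. }
    replace (CJ 0 * exp (- L) * (Rabs (term 0 1) + K)) with (CJ 0 * (Rabs (term 0 1) + K) * (1 * exp (- L))) by ring.
    apply Rmult_le_compat_l. apply Rmult_le_pos; lra. apply Rmult_le_compat_r; lra.
  - intros q Hq. destruct (S_bound_nonneg q ltac:(lra)) as [K [HK HS]].
    assert (HC := CJ_nonneg q 2 (le_n 2) ltac:(lra)).
    exists (CJ q * (Rabs (term q 1) + K)), 2%nat. intros n Hn.
    eapply Rle_trans. apply T2_bound; auto; lra.
    assert (Hs := HS n Hn). unfold Rpower.
    assert (0 < exp ((q - 1) * ln (INR n))) by apply exp_pos.
    assert (0 <= Rabs (term q 1)) by apply Rabs_pos.
    replace (CJ q * (Rabs (term q 1) + K) * exp ((q - 1) * ln (INR n))) with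
      (CJ q * exp ((q - 1) * ln (INR n)) * (Rabs (term q 1) + K)) by ring.
    apply Rmult_le_compat_l. apply Rmult_le_pos; lra. lra.
Qed.
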